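(* Let $G$ be an étale locally compact Hausdorff groupoid and let $\Sigma \rightarrow G$ be a twist. If $f \in \ell^2(\Sigma; G)$ and $\operatorname{supp}(f) \subseteq U$ for some open $U \subseteq G$, then $f$ lies in the closure of $C_c(\Sigma|_U;U)$ with respect to $\|\cdot\|_{2}$.
   Context: A twist $\Sigma\rightarrow G$ is a locally trivial central extension $\mathbb{T}\times G^{(0)} \to \Sigma \to G$; it determines a complex line bundle $L$ over $G$ (the quotient of $\mathbb{C}\times\Sigma$ by $(z,\sigma)\sim(\overline{\lambda}z,\lambda\cdot\sigma)$, $\lambda\in\mathbb{T}$) with a well-defined absolute value $|[z,\sigma]|=|z|$. $C_c(\Sigma;G)$ is the space of continuous compactly supported sections $G\to L$, and for $U\subseteq G$, $C_c(\Sigma|_U;U)$ denotes the sections in $C_c(\Sigma;G)$ whose support is contained in $U$. For $x\in G^{(0)}$, $G_x=s^{-1}(x)$, $G^x=r^{-1}(x)$. The $2$-norm is $\|f\|_2=\sup_{x\in G^{(0)}}\max\{\sum_{\gamma\in G_x}|f(\gamma)|^2,\sum_{\gamma\in G^x}|f(\gamma)|^2\}^{1/2}$, and $\ell^2(\Sigma;G)$ is the completion of $C_c(\Sigma;G)$ in this norm, viewed as a space of continuous sections of $L$. For a section $f$, $\operatorname{supp}(f)=\{\gamma\in G: f(\gamma)\neq 0\}$ (an open set). *)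

(* Defs.v *)
From HB Require Import structures.
From mathcomp Require Import all_boot all_order all_algebra.
From mathcomp Require Import all_classical all_reals all_analysis.
From mathcomp Require Export complex.
Export numFieldNormedType.Exports.

Set Implicit Arguments.
Unset Strict Implicit.
Unset Printing Implicit Defensive.

Import Order.TTheory GRing.Theory Num.Theory.
Local Open Scope classical_set_scope.
Local Open Scope ring_scope.

(* The structure of a groupoid on a type G: unit space G^(0), source,  *)
(* range, a (total function extending the) partial multiplication,     *)
(* only meaningful on composable pairs (s g = r h), and inversion.      *)
Record groupoid_ops (G : Type) := GroupoidOps {
  g0   : set G;
  gsrc : G -> G;
  grng : G -> G;
  gmul : G -> G -> G;
  ginv : G -> G
}.

Definition composable {G : Type} (O : groupoid_ops G) : set (G * G) :=
  [set p | gsrc O p.1 = grng O p.2].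

Definition is_groupoid {G : Type} (O : groupoid_ops G) : Prop :=
  [/\ (forall g, g0 O (gsrc O g) /\ g0 O (grng O g)) /\
      (forall u, g0 O u -> gsrc O u = u /\ grng O u = u),
      (forall g h, gsrc O g = grng O h ->
         gsrc O (gmul O g h) = gsrc O h /\ grng O (gmul O g h) = grng O g),
      (forall g h k, gsrc O g = grng O h -> gsrc O h = grng O k ->
         gmul O (gmul O g h) k = gmul O g (gmul O h k)),
      (forall g, gmul O (grng O g) g = g /\ gmul O g (gsrc O g) = g) &
      (forall g, [/\ gsrc O (ginv O g) = grng O g, grng O (ginv O g) = gsrc O g,
                     gmul O g (ginv O g) = grng O g & gmul O (ginv O g) g = gsrc O g])].

Definition is_topological_groupoid {G : topologicalType} (O : groupoid_ops G)
  : Prop :=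
  [/\ is_groupoid O, continuous (gsrc O), continuous (grng O),
      continuous (ginv O) &
      {within composable O, continuous (fun p : G * G => gmul O p.1 p.2)}].

Definition homeo_onto {X Y : topologicalType} (A : set X) (B : set Y)
  (f : X -> Y) : Prop :=
  (forall x, A x -> B (f x)) /\
  exists g : Y -> X,
    [/\ (forall y, B y -> A (g y)), (forall x, A x -> g (f x) = x),
        (forall y, B y -> f (g y) = y),
        {within A, continuous f} & {within B, continuous g}].

Definition local_homeo {X Y : topologicalType} (f : X -> Y) : Prop :=
  forall x, exists U : set X,
    [/\ open U, U x, open (f @` U) & homeo_onto U (f @` U) f].

Definition is_etale {G : topologicalType} (O : groupoid_ops G) : Prop :=
  local_homeo (grng O).

Definition lc_hausdorff (G : topologicalType) : Prop :=
  hausdorff_space G /\ locally_compact [set: G].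

(* Twists.  Complex numbers are R[i] (R : realType) with the norm      *)
(* topology ( R[i]^o ); the circle group is T.                         *)
Notation CC R := (R[i])^o.

Definition circle {R : realType} : set (CC R) := [set z | `|z : R[i]| = 1].

Section Twist.
Variables (R : realType) (G S : topologicalType).
Variables (OG : groupoid_ops G) (OS : groupoid_ops S).
Variables (pi : S -> G) (iota : CC R -> G -> S).

(* A twist T x G^(0) --iota--> S --pi--> G : a locally trivial central
   extension of topological groupoids. *)
Definition is_twist : Prop :=
  [/\ is_topological_groupoid OS,
      [/\ continuous pi, (forall A : set S, open A -> open (pi @` A)),
          (forall g, exists s, pi s = g),
          (forall a b, gsrc OS a = grng OS b ->
              pi (gmul OS a b) = gmul OG (pi a) (pi b)) &
          (forall a, [/\ pi (gsrc OS a) = gsrc OG (pi a),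
                        pi (grng OS a) = grng OG (pi a),
                        pi (ginv OS a) = ginv OG (pi a) &
                        (g0 OS a -> g0 OG (pi a))])],
      (* iota : continuous injective groupoid homomorphism from the trivial
         group bundle T x G^(0), with pi (iota z u) = u *)
      [/\ {within [set p : CC R * G | circle p.1 /\ g0 OG p.2],
             continuous (fun p => iota p.1 p.2)},
          (forall z u, circle z -> g0 OG u ->
             [/\ pi (iota z u) = u, pi (gsrc OS (iota z u)) = u &
                 pi (grng OS (iota z u)) = u]),
          (forall z w u, circle z -> circle w -> g0 OG u ->
             iota (z * w) u = gmul OS (iota z u) (iota w u)) &
          (forall z w u v, circle z -> circle w -> g0 OG u -> g0 OG v ->
             iota z u = iota w v -> z = w /\ u = v)],
      (forall s, g0 OG (pi s) <-> (exists z, circle z /\ iota z (pi s) = s)) /\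
      (forall z s, circle z ->
         gmul OS (iota z (pi (grng OS s))) s = gmul OS s (iota z (pi (gsrc OS s)))) &
      (forall g, exists (U : set G) (sec : G -> S),
         [/\ open U, U g, {within U, continuous sec},
             (forall h, U h -> pi (sec h) = h) &
             homeo_onto [set p : CC R * G | circle p.1 /\ U p.2] (pi @^-1` U)
               (fun p => gmul OS (iota p.1 (grng OG p.2)) (sec p.2))])].

Definition tact (z : CC R) (s : S) : S := gmul OS (iota z (pi (grng OS s))) s.

(* Sections of the line bundle L = (C x S)/~ , (w,s) ~ (conj z w, z.s). *)
(* A section gamma |-> [F s, s] (pi s = gamma) is encoded by the        *)
(* function F : S -> C, which must satisfy F (z.s) = conj z * F s.      *)
Definition is_section (F : S -> CC R) : Prop :=
  forall z s, circle z -> F (tact z s) = conjc z * F s.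

(* |f(gamma)| = |F s| for any s over gamma (well defined for sections) *)
Definition absL (F : S -> CC R) (g : G) : R :=
  sup [set complex.Re `|F s : R[i]| | s in pi @^-1` [set g]].

Definition suppL (F : S -> CC R) : set G := [set g | absL F g != 0].

Definition in_Cc (F : S -> CC R) : Prop :=
  [/\ continuous F, is_section F & compact (closure (suppL F))].

Definition in_CcU (U : set G) (F : S -> CC R) : Prop :=
  in_Cc F /\ suppL F `<=` U.

Definition sqrte (x : \bar R) : \bar R :=
  match x with
  | EFin r => EFin (Num.sqrt r)
  | EPInf => @EPInf R
  | ENInf => EFin 0
  end.

Definition norm2 (F : S -> CC R) : \bar R :=
  ereal_sup [set sqrte (Order.max
      (\esum_(g in [set g | gsrc OG g = x]) ((absL F g) ^+ 2)%:E)
      (\esum_(g in [set g | grng OG g = x]) ((absL F g) ^+ 2)%:E))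
    | x in g0 OG].

Definition in_norm2_closure (P : (S -> CC R) -> Prop) (F : S -> CC R) : Prop :=
  forall e : R, 0 < e -> exists2 H, P H & (norm2 (fun s => (F s - H s)%R) < e%:E)%E.

(* l^2(S;G): the completion of C_c(S;G) in ||.||_2, viewed as continuous
   sections of L *)
Definition in_l2 (F : S -> CC R) : Prop :=
  [/\ continuous F, is_section F & in_norm2_closure in_Cc F].

End Twist.

(* Main.v *)
Require Import Defs.
From HB Require Import structures.
From mathcomp Require Import all_boot all_order all_algebra.
From mathcomp Require Import all_classical all_reals all_analysis.
From mathcomp Require Import complex.
From mathcomp Require Import lra.
Import numFieldNormedType.Exports.
Import Order.TTheory GRing.Theory Num.Theory.
Local Open Scope classical_set_scope.
Local Open Scope ring_scope.
Set Implicit Arguments.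
Unset Strict Implicit.



Lemma ginvK {T : Type} (O : groupoid_ops T) :
  is_groupoid O -> forall a, ginv O (ginv O a) = a.
Proof.
case=> [[H1 H1'] H2 H3 H4 H5] a.
have [Ha1 Ha2 Ha3 Ha4] := H5 a.
have [Hb1 Hb2 Hb3 Hb4] := H5 (ginv O a).
rewrite -{1}[ginv O (ginv O a)](proj2 (H4 _)) Hb1 Ha2 -Ha4.
rewrite -H3; last by rewrite Ha1.
  by rewrite Hb4 Ha1 (proj1 (H4 a)).
by rewrite Hb1.
Qed.

Lemma gsrc_inj_on {T : topologicalType} (O : groupoid_ops T) :
  is_topological_groupoid O -> is_etale O ->
  forall g, exists V : set T, [/\ open V, V g &
     forall a b, V a -> V b -> gsrc O a = gsrc O b -> a = b].
Proof.
case=> Hg _ _ cinv _ Het g.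
have [W [oW Wg _ [_ [h [_ hK _ _ _]]]]] := Het (ginv O g).
exists (ginv O @^-1` W); split.
- by move/continuousP : cinv; apply.
- by [].
- move=> a b Wa Wb e.
  have Hi : ginv O a = ginv O b.
    rewrite -(hK _ Wa) -(hK _ Wb).
    case: Hg => _ _ _ _ H5.
    have [_ -> _ _] := H5 a; have [_ -> _ _] := H5 b.
    by rewrite e.
  by rewrite -(ginvK Hg a) -(ginvK Hg b) Hi.
Qed.

Lemma grng_inj_on {T : topologicalType} (O : groupoid_ops T) :
  is_etale O ->
  forall g, exists V : set T, [/\ open V, V g &
     forall a b, V a -> V b -> grng O a = grng O b -> a = b].
Proof.
move=> Het g.
have [W [oW Wg _ [_ [h [_ hK _ _ _]]]]] := Het g.
exists W; split => // a b Wa Wb e.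
by rewrite -(hK _ Wa) -(hK _ Wb) e.
Qed.


Lemma ReNorm (R : realType) (z : R[i]) : complex.Re `|z| = Normc.normc z.
Proof. by []. Qed.

Lemma normC_def (R : realType) (z : R[i]) : `|z| = (Normc.normc z)%:C%C.
Proof. by []. Qed.

Lemma normc_conj (R : realType) (z : R[i]) : Normc.normc (conjc z) = Normc.normc z.
Proof. by case: z => a b; rewrite /= sqrrN. Qed.

Lemma normc_circle (R : realType) (z : CC R) : circle z -> Normc.normc z = 1.
Proof. by rewrite /circle /= normC_def => -[]. Qed.

Lemma circle_neq0 (R : realType) (z : CC R) : circle z -> z != 0.
Proof. by rewrite /circle /= => cz; apply/eqP => z0; move: cz; rewrite z0 normr0 => /eqP; rewrite eq_sym oner_eq0. Qed.

Lemma unit_iota1 (R : realType) (G S : topologicalType)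
  (OG : groupoid_ops G) (OS : groupoid_ops S)
  (pi : S -> G) (iota : CC R -> G -> S) :
  is_twist OG OS pi iota -> forall w, g0 OS w -> w = iota 1 (pi w).
Proof.
case=> HtopS [pic piop pisurj pimul piax] [iotac iotapi iotamul iotainj]
  [exact central] loctriv w Hw.
have [HgS _ _ _ _] := HtopS.
have [[H1 H1'] H2 H3 H4 H5] := HgS.
have [_ _ _ piu] := piax w.
have Gu := piu Hw.
have [z [cz ez]] := (exact w).1 Gu.
have ww : gmul OS w w = w.
  by have [_ e] := H1' w Hw; rewrite -{1}e (proj1 (H4 w)).
have czz : circle (z * z).
  by move: cz; rewrite /circle /= normrM => ->; rewrite mulr1.
have E : iota (z * z) (pi w) = iota z (pi w).
  by rewrite iotamul // ez ww.
have [zz _] := iotainj _ _ _ _ czz cz Gu Gu E.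
have z1 : z = 1.
  by apply: (mulfI (circle_neq0 cz)); rewrite mulr1.
by rewrite -z1 ez.
Qed.

Lemma fiber_orbit (R : realType) (G S : topologicalType)
  (OG : groupoid_ops G) (OS : groupoid_ops S)
  (pi : S -> G) (iota : CC R -> G -> S) :
  is_groupoid OG -> is_twist OG OS pi iota ->
  forall s s', pi s = pi s' -> exists z, circle z /\ tact OS pi iota z s = s'.
Proof.
move=> HgG Htw s s' ess.
have U1 := unit_iota1 Htw.
case: Htw => HtopS [pic piop pisurj pimul piax] [iotac iotapi iotamul iotainj]
  [exact central] loctriv.
have [HgS _ _ _ _] := HtopS.
have [[H1 H1'] H2 H3 H4 H5] := HgS.
have [[G1 G1'] G2 G3 G4 G5] := HgG.
have uu : gsrc OS s = gsrc OS s'.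
  rewrite (U1 _ (proj1 (H1 s))) (U1 _ (proj1 (H1 s'))).
  have [-> _ _ _] := piax s; have [-> _ _ _] := piax s'.
  by rewrite ess.
set a := gmul OS s' (ginv OS s).
have comp1 : gsrc OS s' = grng OS (ginv OS s).
  by have [_ -> _ _] := H5 s.
have pia : pi a = grng OG (pi s).
  rewrite /a pimul //.
  have [_ _ -> _] := piax s.
  by rewrite -ess; have [_ _ -> _] := G5 (pi s).
have Ga : g0 OG (pi a) by rewrite pia; exact: (proj2 (G1 _)).
have [z [cz ez]] := (exact a).1 Ga.
exists z; split => //.
rewrite /tact.
have [_ -> _ _] := piax s.
rewrite -pia ez /a H3 //; last by have [-> _ _ _] := H5 s.
have [_ _ _ ->] := H5 s.
by rewrite uu (proj2 (H4 s')).
Qed.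

Lemma absL_section (R : realType) (G S : topologicalType)
  (OG : groupoid_ops G) (OS : groupoid_ops S)
  (pi : S -> G) (iota : CC R -> G -> S) (F : S -> CC R) :
  is_groupoid OG -> is_twist OG OS pi iota -> is_section OS pi iota F ->
  forall s, absL pi F (pi s) = Normc.normc (F s).
Proof.
move=> HgG Htw sF s.
rewrite /absL.
suff -> : [set complex.Re `|F s0| | s0 in pi @^-1` [set pi s]] = [set Normc.normc (F s)].
  by rewrite sup1.
apply/seteqP; split.
- move=> _ [s' /= e <-].
  have [z [cz <-]] := fiber_orbit HgG Htw (esym e).
  rewrite (sF z s cz) /=.
  by rewrite Normc.normcM normc_conj normc_circle // mul1r.
- by move=> _ ->; exists s.
Qed.


Lemma sqrt_sqr_pos (R : realType) (e : R) : 0 <= e -> Num.sqrt (e ^+ 2) = e.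
Proof. by move=> e0; rewrite sqrtr_sqr ger0_norm. Qed.

Lemma norm2_fiber (R : realType) (G S : topologicalType)
  (OG : groupoid_ops G) (pi : S -> G) (F : S -> CC R) (e : R) (x : G) :
  (norm2 OG pi F < e%:E)%E -> g0 OG x ->
  (\esum_(g in [set g | gsrc OG g = x]) ((absL pi F g) ^+ 2)%:E <= (e ^+ 2)%:E)%E /\
  (\esum_(g in [set g | grng OG g = x]) ((absL pi F g) ^+ 2)%:E <= (e ^+ 2)%:E)%E.
Proof.
move=> Hn gx.
set A := esum _ _; set B := esum _ _.
have HM : (Defs.sqrte (Order.max A B) <= norm2 OG pi F)%E.
  by rewrite /norm2; apply: ereal_sup_ubound; exists x.
have A0 : (0 <= A)%E by apply: esum_ge0 => g _; rewrite lee_fin sqr_ge0.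
have B0 : (0 <= B)%E by apply: esum_ge0 => g _; rewrite lee_fin sqr_ge0.
have AM : (A <= Order.max A B)%E by rewrite le_max lexx.
have BM : (B <= Order.max A B)%E by rewrite le_max lexx orbT.
have := le_lt_trans HM Hn.
case E: (Order.max A B) AM BM => [r| |] AM BM /=.
- rewrite lte_fin => sr.
  have r0 : 0 <= r by rewrite -lee_fin (le_trans A0).
  have e0 : 0 < e by apply: le_lt_trans sr.
  have re : r <= e ^+ 2.
    rewrite -(ler_sqrt _ (sqr_ge0 _)) sqrtr_sqr ger0_norm; last exact: ltW.
    exact: ltW.
  by split; [apply: (le_trans AM) | apply: (le_trans BM)]; rewrite lee_fin.
- by rewrite ltNge leey.
- by move: AM; rewrite leeNy_eq => /eqP AE; move: A0; rewrite AE.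
Qed.

Lemma norm2_point (R : realType) (G S : topologicalType)
  (OG : groupoid_ops G) (pi : S -> G) (F : S -> CC R) (e : R) :
  is_groupoid OG ->
  (norm2 OG pi F < e%:E)%E -> forall g, absL pi F g ^+ 2 <= e ^+ 2.
Proof.
move=> [[H1 H1'] _ _ _ _] Hn g.
have [Hs _] := norm2_fiber Hn (proj1 (H1 g)).
rewrite -lee_fin; apply: le_trans Hs.
apply: esum_ge; exists [set g].
  by split; [exact: finite_set1 | move=> y ->].
by rewrite fsbig_set1.
Qed.

Lemma norm2_le (R : realType) (G S : topologicalType)
  (OG : groupoid_ops G) (pi : S -> G) (F : S -> CC R) (r : R) :
  0 <= r ->
  (forall x, g0 OG x ->
  (\esum_(g in [set g | gsrc OG g = x]) ((absL pi F g) ^+ 2)%:E <= (r ^+ 2)%:E)%E /\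
  (\esum_(g in [set g | grng OG g = x]) ((absL pi F g) ^+ 2)%:E <= (r ^+ 2)%:E)%E) ->
  (norm2 OG pi F <= r%:E)%E.
Proof.
move=> r0 Hb; rewrite /norm2; apply: ge_ereal_sup => _ [x gx <-].
have [HA HB] := Hb x gx.
have : (Order.max (\esum_(g in [set g | gsrc OG g = x]) ((absL pi F g) ^+ 2)%:E)
    (\esum_(g in [set g | grng OG g = x]) ((absL pi F g) ^+ 2)%:E) <= (r ^+ 2)%:E)%E.
  by rewrite ge_max HA HB.
case: (Order.max _ _) => [t| |] /=.
- rewrite lee_fin => tr; rewrite lee_fin.
  by apply: le_trans (ler_wsqrtr tr) _; rewrite sqrt_sqr_pos.
- by rewrite leye_eq.
- by rewrite lee_fin.
Qed.


Definition pt_of (T : topologicalType) (x : T) : Type := T.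
HB.instance Definition _ (T : topologicalType) (x : T) := Topological.copy (@pt_of T x) T.
HB.instance Definition _ (T : topologicalType) (x : T) := isPointed.Build (@pt_of T x) x.

Lemma compact_cover_pt (T : topologicalType) (K : set T) (x : T) :
  compact K -> cover_compact K.
Proof.
move=> cK.
have : @compact (@pt_of T x) K by [].
by rewrite compact_cover.
Qed.

Lemma ind1 (R : realType) (T : Type) (A : set T) (g : T) : A g -> (\1_A g : R) = 1.
Proof. by move=> Ag; rewrite indicE mem_set. Qed.

Lemma ind0 (R : realType) (T : Type) (A : set T) (g : T) : ~ A g -> (\1_A g : R) = 0.
Proof. by move=> Ag; rewrite indicE memNset. Qed.

Lemma sum_le_const (R : realType) (I : Type) (r : seq I) (F : I -> \bar R) (c : R) :
  (forall i, (F i <= c%:E)%E) -> (\sum_(i <- r) F i <= (c * (size r)%:R)%:E)%E.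
Proof.
move=> HF; elim: r => [|i r IH]; first by rewrite big_nil mulr0.
rewrite big_cons /= -addn1 natrD mulrDr mulr1 EFinD addeC.
exact: leeD.
Qed.

Lemma fiber_count (R : realType) (T : topologicalType) (p : T -> T) (K : set T) :
  (forall g, exists V : set T, [/\ open V, V g &
     forall a b, V a -> V b -> p a = p b -> a = b]) ->
  compact K -> exists N : nat, forall x (c : R), 0 <= c ->
   (\esum_(g in [set g | p g = x]) (c * \1_K g)%:E <= (c * N%:R)%:E)%E.
Proof.
move=> Hloc cK.
case: (pselect (exists x, K x)) => [[x0 _]|nK]; last first.
  exists 0%N => x c c0; rewrite esum1 ?mulr0// => g _.
  by rewrite ind0 ?mulr0// => Kg; apply: nK; exists g.
have [V HV] := choice Hloc.
have cov := compact_cover_pt x0 cK.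
have op1 : forall i, K i -> open (V i) by move=> i _; have [] := HV i.
have cv1 : K `<=` cover K V by move=> g Kg; exists g => //; have [] := HV g.
have [D' subD Kc] := cov T K V op1 cv1.
exists (size (finmap.enum_fset D')) => x c c0.
apply: (@le_trans _ _ (\esum_(g in [set g | p g = x])
   (\sum_(i <- (finmap.enum_fset D')) (c * \1_(V i) g)%:E))).
  apply: le_esum => g _.
  case: (pselect (K g)) => [Kg|nKg]; last first.
    by rewrite ind0 // mulr0; apply: sume_ge0 => i _; rewrite lee_fin mulr_ge0.
  have [i Di Vig] := Kc g Kg.
  rewrite (big_rem i) //= ind1 // ind1 // mulr1.
  by apply: leeDl; apply: sume_ge0 => j _; rewrite lee_fin mulr_ge0.
rewrite esum_sum; last by move=> g i _ _; rewrite lee_fin mulr_ge0.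
apply: sum_le_const => i.
set h := fun g => (c * \1_(V i) g)%:E.
have [_ _ Vinj] := HV i.
case: (pselect (exists g0, p g0 = x /\ V i g0)) => [[g0 [pg0 Vg0]]|nex]; last first.
  rewrite esum1 // => g pg; rewrite ind0 ?mulr0 // => Vg; apply: nex; by exists g.
rewrite (esumID [set g0]); last by move=> g _; rewrite lee_fin mulr_ge0.
rewrite [X in (X + _)%E](_ : _ = \esum_(g in [set g0]) (c * \1_(V i) g)%:E); last first.
  congr esum; apply/seteqP; split; first by move=> g [].
  by move=> g ->; split.
rewrite esum_set1; last by rewrite lee_fin mulr_ge0.
rewrite esum1 ?ind1 ?mulr1 ?adde0 //.
move=> g [/= pg ng]; rewrite ind0 ?mulr0 // => Vg; apply: ng.
by apply: Vinj => //; rewrite pg pg0.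
Qed.




Definition pR (R : realType) (y : R) : R := (y + `|y|) / 2.
Definition cu (R : realType) (u : R) : R := pR (u - 1) - pR (u - 2).
Definition pC (R : realType) (y : R[i]) : R[i] := (y + `|y|) * (2^-1)%:C%C.
Definition cC (R : realType) (d : R) (w : R[i]) : R[i] :=
  pC (w * (d^-1)%:C%C - 1) - pC (w * (d^-1)%:C%C - 2).
Definition cutoff (R : realType) (S : Type) (d : R) (f : S -> CC R) : S -> CC R :=
  fun s => f s * cC d `|f s|.

Lemma normc_real (R : realType) (x : R) : Normc.normc (x%:C%C) = `|x|.
Proof. by rewrite /= expr0n /= addr0 sqrtr_sqr. Qed.

Lemma pC_real (R : realType) (y : R) : pC (y%:C%C) = (pR y)%:C%C.
Proof.
rewrite /pC /pR normC_def normc_real.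
by rewrite -rmorphD -rmorphM.
Qed.

Lemma cC_real (R : realType) (d t : R) : cC d (t%:C%C) = (cu (t / d))%:C%C.
Proof.
rewrite /cC /cu -rmorphM.
have -> : (1 : R[i]) = (1 : R)%:C%C by rewrite rmorph1.
have -> : (2 : R[i]) = (2 : R)%:C%C by rewrite rmorph_nat.
by rewrite -!rmorphB !pC_real -rmorphB.
Qed.

Lemma pR_pos (R : realType) (y : R) : 0 <= y -> pR y = y.
Proof. by move=> y0; rewrite /pR ger0_norm //; lra. Qed.

Lemma pR_neg (R : realType) (y : R) : y <= 0 -> pR y = 0.
Proof. by move=> y0; rewrite /pR ler0_norm //; lra. Qed.

Lemma cu_facts (R : realType) (u : R) :
  [/\ 0 <= cu u <= 1, (u <= 1 -> cu u = 0) & (2 <= u -> cu u = 1)].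
Proof.
rewrite /cu.
have [u1|u1] := lerP u 1.
  have -> : pR (u - 1) = 0 by apply: pR_neg; lra.
  have -> : pR (u - 2) = 0 by apply: pR_neg; lra.
  rewrite subr0; split => //; last by move=> h; lra.
  by rewrite lexx ler01.
have [u2|u2] := lerP u 2.
  have -> : pR (u - 1) = u - 1 by apply: pR_pos; lra.
  have -> : pR (u - 2) = 0 by apply: pR_neg; lra.
  split; [apply/andP; split; lra | move=> h; lra | move=> h; lra].
have -> : pR (u - 1) = u - 1 by apply: pR_pos; lra.
have -> : pR (u - 2) = u - 2 by apply: pR_pos; lra.
split; [apply/andP; split; lra | move=> h; lra | move=> h; lra].
Qed.

Lemma cut_bound (R : realType) (d : R) (a b : R[i]) : 0 < d ->
  Normc.normc (a - a * cC d `|a|) ^+ 2 <=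
  2 * Normc.normc (a - b) ^+ 2 + (if b == 0 then 0 else 8 * d ^+ 2).
Proof.
move=> d0.
set t := Normc.normc a.
have t0 : 0 <= t by rewrite /t; case: a {t} => x y /=.
have [[/andP[k0 k1] ksmall kbig] ] := cu_facts (t / d).
set k := cu (t / d) in k0 k1 ksmall kbig *.
have -> : a - a * cC d `|a| = a * ((1 - k)%:C%C).
  rewrite normC_def cC_real -/t -/k.
  have E1 : ((1 - k)%:C)%C = 1 - (k%:C)%C :> R[i].
    by apply/eqP; rewrite eq_complex /= !subr0 !eqxx.
  by rewrite E1 mulrBr mulr1.
rewrite Normc.normcM normc_real ger0_norm; last lra.
have nb0 : 0 <= Normc.normc (a - b) by case: (a - b) => x y /=.
have hc : 0 <= (if b == 0 then 0 else 8 * d ^+ 2) by case: ifP => _ //; rewrite mulr_ge0 // sqr_ge0.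
have [t2|t2] := lerP (2 * d) t.
  rewrite kbig; last by rewrite ler_pdivlMr //; lra.
  rewrite subrr mulr0 expr0n /=.
  by apply: addr_ge0 => //; rewrite mulr_ge0 // sqr_ge0.
have le1 : (t * (1 - k)) ^+ 2 <= t ^+ 2.
  have h1 : 0 <= t * (1 - k) by apply: mulr_ge0 => //; lra.
  have h2 : t * (1 - k) <= t by rewrite -[leRHS]mulr1 ler_wpM2l //; lra.
  nra.
apply: (le_trans le1).
case: eqP => [->|_].
  rewrite subr0 -/t; nra.
nra.
Qed.

Lemma cut_supp (R : realType) (d : R) (a : R[i]) : 0 < d ->
  a * cC d `|a| != 0 -> d < Normc.normc a.
Proof.
move=> d0; rewrite normC_def cC_real.
have [[_ ksmall _]] := cu_facts (Normc.normc a / d).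
rewrite ltNge; apply: contra => h.
by rewrite ksmall ?mulr0 // ler_pdivrMr // mul1r.
Qed.



Lemma section_sub (R : realType) (G S : topologicalType)
  (OS : groupoid_ops S) (pi : S -> G) (iota : CC R -> G -> S) (F F' : S -> CC R) :
  is_section OS pi iota F -> is_section OS pi iota F' ->
  is_section OS pi iota (fun s => F s - F' s).
Proof. by move=> h h' z s cz; rewrite h // h' // mulrBr. Qed.

Lemma section_cut (R : realType) (G S : topologicalType)
  (OS : groupoid_ops S) (pi : S -> G) (iota : CC R -> G -> S) (F : S -> CC R) (d : R) :
  is_section OS pi iota F -> is_section OS pi iota (cutoff d F).
Proof.
move=> h z s cz; rewrite /cutoff h // normrM.
have -> : `|conjc z| = 1 :> R[i].
  by rewrite normC_def normc_conj normc_circle.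
by rewrite mul1r mulrA.
Qed.

Lemma cont_pC (R : realType) : continuous (fun w : CC R => (pC w : CC R)).
Proof.
move=> x; rewrite /pC.
apply: (@continuousM _ _ (fun w : CC R => w + `|w|) (fun=> _)); last exact: cst_continuous.
apply: (@continuousD _ (R[i]^o) _ id (fun w : CC R => `|w|)) => //.
exact: norm_continuous.
Qed.

Lemma cont_aff (R : realType) (k c : CC R) : continuous (fun w : CC R => (w * k - c : CC R)).
Proof.
move=> x.
apply: (@continuousB _ (R[i]^o) _ (fun w : CC R => w * k) (fun=> c)); last exact: cst_continuous.
by apply: (@continuousM _ _ id (fun=> k)) => //; exact: cst_continuous.
Qed.

Lemma cont_cC (R : realType) (d : R) : continuous (fun w : CC R => (cC d w : CC R)).
Proof.
move=> x; rewrite /cC.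
apply: (@continuousB _ (R[i]^o) _ (fun w : CC R => (pC (w * (d^-1)%:C%C - 1) : CC R))
   (fun w : CC R => (pC (w * (d^-1)%:C%C - 2) : CC R))).
  exact: (continuous_comp (@cont_aff R ((d^-1)%:C%C) 1 x) (@cont_pC R _)).
exact: (continuous_comp (@cont_aff R ((d^-1)%:C%C) 2 x) (@cont_pC R _)).
Qed.

Lemma cont_cut (R : realType) (S : topologicalType) (F : S -> CC R) (d : R) :
  continuous F -> continuous (cutoff d F).
Proof.
move=> cF x; rewrite /cutoff.
apply: (@continuousM _ _ F (fun s => (cC d `|F s| : CC R))); first exact: cF.
have cn := continuous_comp (cF x) (@norm_continuous _ (R[i]^o) (F x)).
exact: (continuous_comp cn (@cont_cC R d _)).
Qed.

Unset Implicit Arguments.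

Theorem proposition3p3 (R : realType) (G S : topologicalType)
  (OG : groupoid_ops G) (OS : groupoid_ops S)
  (pi : S -> G) (iota : CC R -> G -> S) :
  is_topological_groupoid OG -> is_etale OG -> lc_hausdorff G ->
  is_twist OG OS pi iota ->
  forall (f : S -> CC R) (U : set G),
    open U ->
    in_l2 OG OS pi iota f ->
    suppL pi f `<=` U ->
    in_norm2_closure OG pi (in_CcU OS pi iota U) f.
Proof.
move=> HOG Het Hlc Htw f U oU [cf sf clf] suppU e e0.
have HgG : is_groupoid OG by case: HOG.
have pisurj : forall g, exists s, pi s = g.
  by case: Htw => _ [_ _ ps _ _] _ _ _.
have e4 : 0 < e / 4 by rewrite divr_gt0.
have [g [cg sg Kg] Hfg] := clf (e / 4) e4.
set K := closure (suppL pi g).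
have [N1 HN1] := fiber_count R (gsrc_inj_on HOG Het) Kg.
have [N2 HN2] := fiber_count R (grng_inj_on Het) Kg.
set N := (N1 + N2)%N.
set M : R := N%:R + 1.
have M1 : 1 <= M by rewrite /M lerDr.
have M0 : 0 < M by apply: lt_le_trans M1.
set d : R := e / (8 * M).
have d0 : 0 < d by rewrite /d divr_gt0 // mulr_gt0.
have dM : d * (8 * M) = e by rewrite /d mulfVK // mulf_neq0 // gt_eqF.
have d2 : 0 < d / 2 by rewrite divr_gt0.
have [g' [cg' sg' Kg'] Hfg'] := clf (d / 2) d2.
set H := cutoff d f.
have sH : is_section OS pi iota H by exact: section_cut.
have sfH := section_sub sf sH.
have sfg := section_sub sf sg.
have sfg' := section_sub sf sg'.
have suppH : forall gm, suppL pi H gm -> suppL pi g' gm /\ suppL pi f gm.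
  move=> gm; rewrite /suppL /=; have [s <-] := pisurj gm.
  rewrite (absL_section HgG Htw sH) (absL_section HgG Htw sg') (absL_section HgG Htw sf).
  move=> hs.
  have Hs0 : H s != 0 by apply: contra hs => /eqP ->; rewrite Normc.normc0.
  have lt1 := cut_supp d0 Hs0.
  have pt := norm2_point HgG Hfg' (pi s).
  have E := absL_section HgG Htw sfg' s.
  rewrite E in pt.
  have n1 : 0 <= Normc.normc (f s - g' s) by case: (f s - g' s) => ? ? /=.
  have n2 : 0 <= Normc.normc (g' s) by case: (g' s) => ? ? /=.
  have tri : Normc.normc (f s) <= Normc.normc (f s - g' s) + Normc.normc (g' s).
    by rewrite -{1}(subrK (g' s) (f s)) le_normcD.
  have n3 : Normc.normc (f s - g' s) <= d / 2 by nra.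
  split; apply/eqP => h0; nra.
exists H.
  split; [split|].
  - exact: cont_cut.
  - exact: sH.
  - apply: (subclosed_compact _ Kg'); first exact: closed_closure.
    by apply: closureS => gm /suppH [].
  - by move=> gm /suppH [_ /suppU].
apply: (@le_lt_trans _ _ ((e / 2)%:E)); last by rewrite lte_fin; lra.
apply: norm2_le; first lra.
move=> x gx.
have [Hs Hr] := norm2_fiber Hfg gx.
have c0 : 0 <= 8 * d ^+ 2 by rewrite mulr_ge0 // sqr_ge0.
have gen : forall (A : set G) (n : nat), (n <= N)%N ->
   (\esum_(gm in A) (8 * d ^+ 2 * \1_K gm)%:E <= (8 * d ^+ 2 * n%:R)%:E)%E ->
   (\esum_(gm in A) (absL pi (fun s => f s - g s) gm ^+ 2)%:E <= ((e / 4) ^+ 2)%:E)%E ->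
   (\esum_(gm in A) (absL pi (fun s => f s - H s) gm ^+ 2)%:E <= ((e / 2) ^+ 2)%:E)%E.
  move=> A n nN HK HA.
  apply: (@le_trans _ _ (\esum_(gm in A) ((absL pi (fun s => f s - g s) gm ^+ 2)%:E
     + (absL pi (fun s => f s - g s) gm ^+ 2)%:E + (8 * d ^+ 2 * \1_K gm)%:E))).
    apply: le_esum => gm _; have [s <-] := pisurj gm.
    rewrite (absL_section HgG Htw sfH) (absL_section HgG Htw sfg).
    rewrite -!EFinD lee_fin.
    have cb := cut_bound (f s) (g s) d0.
    have ind : (if g s == 0 then 0 else 8 * d ^+ 2) <= 8 * d ^+ 2 * \1_K (pi s).
      case: eqP => [_|/eqP gs0]; first by rewrite mulr_ge0 // indicE ler0n.
      rewrite ind1 ?mulr1 //; apply: subset_closure.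
      rewrite /suppL /= (absL_section HgG Htw sg).
      by apply: contra gs0 => /eqP h; apply/eqP; exact: Normc.eq0_normc h.
    rewrite /H /cutoff /=; apply: (le_trans cb).
    have two : forall y : R, 2 * y = y + y by move=> y; lra.
    by rewrite two lerD2l.
  rewrite esumD; last 2 first.
  - by move=> gm _; rewrite -EFinD lee_fin addr_ge0 // sqr_ge0.
  - by move=> gm _; rewrite lee_fin mulr_ge0 // indicE ler0n.
  rewrite esumD; last 2 first.
  - by move=> gm _; rewrite lee_fin sqr_ge0.
  - by move=> gm _; rewrite lee_fin sqr_ge0.
  apply: le_trans (leeD (leeD HA HA) HK) _.
  rewrite -!EFinD lee_fin.
  have h1 : n%:R <= M by rewrite /M (@le_trans _ _ N%:R) // ?ler_nat // lerDl.
  have h2 : 8 * d <= e by nra.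
  have h3 : 8 * d ^+ 2 * n%:R <= d * e by nra.
  nra.
split.
- apply: gen (HN1 x _ c0) Hs; exact: leq_addr.
- apply: gen (HN2 x _ c0) Hr; exact: leq_addl.
Qed.
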